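(* Let $\mathcal{P}=\{\alpha_i\}_{i=1}^{3g-3+n}$ be a pants decomposition of $S_{g,n}$ with Fenchel–Nielsen coordinates $(\ell_i,\tau_i)_{i=1}^{3g-3+n}$. Let $\mathcal{F}:\mathcal{T}_{g,n}\to\mathbb{R}_+$ be a function. Then $\mathcal{F}$ is bounding with respect to these Fenchel–Nielsen coordinates if and only if, for every $Y\in\mathcal{T}_{g,n}$ and every $i$, \[ \sup_{Z\in\mathrm{Mod}_{g,n}\cdot Y}\left\{\frac{\ell_i(Z)+|\tau_i(Z)|}{\mathcal{F}(Z)}\right\}<+\infty . \]
   Context: $\mathcal{T}_{g,n}$ is the Teichmüller space of $S_{g,n}$, an oriented surface of genus $g$ with $n>0$ punctures and $2g-2+n>0$. $\mathrm{Mod}_{g,n}$ is its mapping class group, acting by change of marking. $\ell_i$ is the hyperbolic length of $\alpha_i$ and $\tau_i$ is the Fenchel–Nielsen twist parameter along $\alpha_i$ (measured in length). For $\mathbf m=(m_1,\dots,m_{3g-3+n})\in\mathbb{Z}^{3g-3+n}$ let \[ \mathcal{C}^{\mathbf m}_{\mathcal P}=\{Y\in\mathcal{T}_{g,n}: m_i\ell_i(Y)\le\tau_i(Y)\le(m_i+1)\ell_i(Y)\ \text{for all } i\}. \] $\mathcal{F}$ is called bounding with respect to $(\ell_i,\tau_i)$ if for every $Y\in\mathcal{T}_{g,n}$ there is a constant $C>0$ with the following property: for every $L>0$, every $\mathbf m$, every $Z\in\mathrm{Mod}_{g,n}\cdot Y\cap\mathcal{C}^{\mathbf m}_{\mathcal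 P}\cap\mathcal{F}^{-1}([0,L])$ and every $i$, \[ \ell_i(Z)\le C\cdot\frac{L}{\max\{|m_i|,|m_i+1|\}}. \] *)

(* Defs.v *)
From Stdlib Require Import Reals Lra Lia ZArith.
Open Scope R_scope.

(* Number of curves in a pants decomposition of S_{g,n}. *)
Definition npants (g n : nat) : nat := (3 * g + n - 3)%nat.

(* Teichmueller space T_{g,n} is modelled abstractly as a type [T] endowed
   with Fenchel--Nielsen coordinates (ell i, tau i), i < N, w.r.t. a fixed
   pants decomposition: a bijection T -> (R_{>0} x R)^N. *)
Definition FN_coordinates (T : Type) (N : nat)
  (ell tau : nat -> T -> R) : Prop :=
  (forall Y i, (i < N)%nat -> 0 < ell i Y) /\
  (forall Y Y', (forall i, (i < N)%nat -> ell i Y = ell i Y' /\ tau i Y = tau i Y') ->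
                Y = Y') /\
  (forall l t : nat -> R, (forall i, (i < N)%nat -> 0 < l i) ->
     exists Y, forall i, (i < N)%nat -> ell i Y = l i /\ tau i Y = t i).

(* A group (the mapping class group) acting on T. *)
Record group_action (G T : Type) := {
  g_one : G;
  g_mul : G -> G -> G;
  g_inv : G -> G;
  g_mulA : forall a b c, g_mul a (g_mul b c) = g_mul (g_mul a b) c;
  g_mul1 : forall a, g_mul g_one a = a;
  g_mulV : forall a, g_mul (g_inv a) a = g_one;
  act : G -> T -> T;
  act1 : forall Y, act g_one Y = Y;
  actM : forall a b Y, act (g_mul a b) Y = act a (act b Y)
}.

Arguments act {G T} _ _ _.

Definition in_orbit {G T : Type} (A : group_action G T) (Y Z : T) : Prop :=
  exists phi : G, Z = act A phi Y.

Definition cell {T : Type} (N : nat) (ell tau : nat -> T -> R)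
  (m : nat -> Z) (Z0 : T) : Prop :=
  forall i, (i < N)%nat ->
    IZR (m i) * ell i Z0 <= tau i Z0 <= (IZR (m i) + 1) * ell i Z0.

Definition bounding {G T : Type} (A : group_action G T) (N : nat)
  (ell tau : nat -> T -> R) (F : T -> R) : Prop :=
  forall Y : T, exists C : R, 0 < C /\
    forall (L : R), 0 < L ->
    forall (m : nat -> Z) (Z0 : T),
      in_orbit A Y Z0 -> cell N ell tau m Z0 -> 0 <= F Z0 <= L ->
      forall i, (i < N)%nat ->
        ell i Z0 <= C * (L / Rmax (Rabs (IZR (m i))) (Rabs (IZR (m i) + 1))).

(* Main.v *)
Require Import Defs.
From Stdlib Require Import Reals ZArith Lra Lia Psatz.
Open Scope R_scope.

Lemma key (m : Z) (l t : R) : 0 < l -> IZR m * l <= t <= (IZR m + 1) * l ->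
  1 <= Rmax (Rabs (IZR m)) (Rabs (IZR m + 1)) /\
  Rabs t <= Rmax (Rabs (IZR m)) (Rabs (IZR m + 1)) * l /\
  Rmax (Rabs (IZR m)) (Rabs (IZR m + 1)) * l <= l + Rabs t.
Proof.
  intros hl [h1 h2].
  destruct (Z_le_gt_dec 0 m) as [hm|hm].
  - apply IZR_le in hm.
    rewrite (Rabs_right (IZR m)) by lra.
    rewrite (Rabs_right (IZR m + 1)) by lra.
    rewrite Rmax_right by lra.
    assert (0 <= t) by nra.
    rewrite Rabs_right by lra. nra.
  - assert (hm' : (m <= -1)%Z) by lia. apply IZR_le in hm'.
    rewrite (Rabs_left (IZR m)) by lra.
    rewrite (Rabs_left1 (IZR m + 1)) by lra.
    rewrite Rmax_left by lra.
    assert (t <= 0) by nra.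
    rewrite Rabs_left1 by lra. nra.
Qed.

Lemma fin_bound (N : nat) (P : nat -> R -> Prop) :
  (forall i B B', P i B -> B <= B' -> P i B') ->
  (forall i, (i < N)%nat -> exists B, P i B) ->
  exists C, 0 < C /\ forall i, (i < N)%nat -> P i C.
Proof.
  intros mono. induction N as [|N IH]; intros H.
  - exists 1. split; [lra|]. intros i hi; lia.
  - destruct IH as [C [hC HC]].
    { intros i hi; apply H; lia. }
    destruct (H N ltac:(lia)) as [B HB].
    exists (C + Rabs B). split. { pose proof (Rabs_pos B); lra. }
    intros i hi. destruct (Nat.eq_dec i N) as [->|ne].
    + apply (mono _ B); auto. pose proof (Rle_abs B); lra.
    + apply (mono _ C). apply HC; lia. pose proof (Rabs_pos B); lra.
Qed.

Theorem proposition4p2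
  (g n : nat) (hn : (0 < n)%nat) (hgn : (0 < 2 * g + n - 2)%nat)
  (T : Type) (ell tau : nat -> T -> R)
  (hFN : FN_coordinates T (npants g n) ell tau)
  (Mod : Type) (A : group_action Mod T)
  (F : T -> R) (hF : forall Z0, 0 < F Z0) :
  bounding A (npants g n) ell tau F <->
  (forall (Y : T) (i : nat), (i < npants g n)%nat ->
     exists B : R, forall Z0 : T, in_orbit A Y Z0 ->
       (ell i Z0 + Rabs (tau i Z0)) / F Z0 <= B).
Proof.
  destruct hFN as [hpos _].
  split.
  - intros hb Y i hi. destruct (hb Y) as [C [hC HC]].
    exists (2 * C). intros Z0 hZ.
    set (m := fun j => (up (tau j Z0 / ell j Z0) - 1)%Z).
    assert (hcell : cell (npants g n) ell tau m Z0).
    { intros j hj. unfold m. rewrite minus_IZR.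
      pose proof (archimed (tau j Z0 / ell j Z0)) as [a1 a2].
      pose proof (hpos Z0 j hj) as hl.
      set (x := tau j Z0 / ell j Z0) in *.
      assert (tau j Z0 = x * ell j Z0) by (unfold x; field; lra).
      split; nra. }
    pose proof (HC (F Z0) (hF Z0) m Z0 hZ hcell ltac:(pose proof (hF Z0); lra) i hi) as Hl.
    pose proof (hpos Z0 i hi) as hl.
    destruct (key (m i) (ell i Z0) (tau i Z0) hl (hcell i hi)) as [k1 [k2 k3]].
    set (M := Rmax (Rabs (IZR (m i))) (Rabs (IZR (m i) + 1))) in *.
    pose proof (hF Z0) as hf.
    assert (hMl : M * ell i Z0 <= C * F Z0).
    { replace (C * (F Z0 / M)) with ((C * F Z0) / M) in Hl by (field; lra).
      apply Rmult_le_compat_l with (r := M) in Hl; [|lra].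
      replace (M * (C * F Z0 / M)) with (C * F Z0) in Hl by (field; lra). lra. }
    apply Rmult_le_reg_r with (F Z0); [lra|].
    unfold Rdiv. rewrite Rmult_assoc, Rinv_l by lra. nra.
  - intros H Y.
    destruct (fin_bound (npants g n)
      (fun i B => forall Z0, in_orbit A Y Z0 -> (ell i Z0 + Rabs (tau i Z0)) / F Z0 <= B))
      as [C [hC HC]].
    { intros i B B' h1 h2 Z0 hZ. specialize (h1 Z0 hZ). lra. }
    { intros i hi. apply H; auto. }
    exists C. split; [exact hC|].
    intros L hL m Z0 hZ hcell [hF0 hFL] i hi.
    pose proof (HC i hi Z0 hZ) as hb.
    pose proof (hpos Z0 i hi) as hl.
    pose proof (hF Z0) as hf.
    destruct (key (m i) (ell i Z0) (tau i Z0) hl (hcell i hi)) as [k1 [k2 k3]].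
    set (M := Rmax (Rabs (IZR (m i))) (Rabs (IZR (m i) + 1))) in *.
    assert (h1 : ell i Z0 + Rabs (tau i Z0) <= C * F Z0).
    { apply Rmult_le_compat_r with (r := F Z0) in hb; [|lra].
      unfold Rdiv in hb. rewrite Rmult_assoc, Rinv_l in hb by lra. lra. }
    replace (C * (L / M)) with ((C * L) / M) by (field; lra).
    apply Rmult_le_reg_r with M; [lra|].
    unfold Rdiv. rewrite Rmult_assoc, Rinv_l by lra. nra.
Qed.
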